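(* Let $\ell\ge3$ be an odd integer and $q=(\ell^2-1)/2$, so $2q+1=\ell^2$. Define $g:\mathbb Z_{2q+1}\to\mathbb R$ by $g(n)=\sin(2\pi|n|/\ell)$ if $|n|\le\ell$ and $g(n)=0$ otherwise ($|n|\le q$). Then for $|n|\le q$, $$\widehat g(n)=\frac{2\sin^2(\pi n/\ell)\sin(2\pi/\ell)}{\ell\,\big(\cos(2\pi n/\ell^2)-\cos(2\pi/\ell)\big)},$$ and $f_\star=g-\widehat g$ satisfies $\widehat{f_\star}=-f_\star$, $f_\star(0)=0$, $f_\star(n)\ge0$ for $\ell\le|n|\le q$, and a positive multiple of $f_\star$ lies in $\mathcal A^{\rm disc}_-(q)$ with $k_{-f_\star}=\ell$. Consequently $\mathbb A^{\rm disc}_-(q)\le\ell=\sqrt{2q+1}$.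
   Context: $\mathbb Z_{2q+1}$ is the integers modulo $2q+1$ with representatives $\{-q,\dots,q\}$, and $|n|$ denotes the absolute value of the representative of $n$. The discrete Fourier transform is $\widehat f(k)=\frac1{\sqrt{2q+1}}\sum_{n=-q}^qf(n)e^{-2\pi ikn/(2q+1)}$ (at $n=0$ the formula for $\widehat g$ is interpreted as $0$). For $s\in\{+1,-1\}$, $\mathcal A^{\rm disc}_s(q)$ is the set of even $f:\mathbb Z_{2q+1}\to\mathbb R$ with $sf(0)\le0$, $\widehat f(0)\le0$, $f(\pm q)\ge1$ and $s\widehat f(\pm q)\ge1$; $k_{sf}$ is the smallest nonnegative integer $k$ such that $f(n)\ge0$ and $s\widehat f(n)\ge0$ whenever $k\le|n|\le q$; and $\mathbb A^{\rm disc}_s(q)=\min\{k_{sf}: f\in\mathcal A^{\rm disc}_s(q)\}$. *)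

(* Defs.v *)
From Stdlib Require Export Reals ZArith.
Open Scope R_scope.

(* Z_{2q+1} is represented by Z with representatives -q..q; functions
   Z_{2q+1} -> R are functions Z -> R of which only the values on
   -q..q matter. |n| is Z.abs n for n in -q..q. *)

Definition zsum (q : Z) (F : Z -> R) : R :=
  sum_f_R0 (fun i => F (Z.of_nat i - q)%Z) (Z.to_nat (2 * q)).

(* Discrete Fourier transform
   f^(k) = 1/sqrt(2q+1) sum_n f(n) e^{-2 pi i k n/(2q+1)},
   given by its real and imaginary parts. *)
Definition dft_re (q : Z) (f : Z -> R) (k : Z) : R :=
  / sqrt (IZR (2 * q + 1)) *
  zsum q (fun n => f n * cos (2 * PI * IZR k * IZR n / IZR (2 * q + 1))).

Definition dft_im (q : Z) (f : Z -> R) (k : Z) : R :=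
  - (/ sqrt (IZR (2 * q + 1)) *
     zsum q (fun n => f n * sin (2 * PI * IZR k * IZR n / IZR (2 * q + 1)))).

Definition even_on (q : Z) (f : Z -> R) : Prop :=
  forall n : Z, (- q <= n <= q)%Z -> f (- n)%Z = f n.

(* The class A^disc_s(q). Inequalities involving f^ mean: f^ is real
   (imaginary part 0) and its real part satisfies the inequality. *)
Definition in_Adisc (s : R) (q : Z) (f : Z -> R) : Prop :=
  even_on q f /\
  s * f 0%Z <= 0 /\
  (dft_im q f 0%Z = 0 /\ dft_re q f 0%Z <= 0) /\
  f q >= 1 /\ f (- q)%Z >= 1 /\
  (dft_im q f q = 0 /\ s * dft_re q f q >= 1) /\
  (dft_im q f (- q)%Z = 0 /\ s * dft_re q f (- q)%Z >= 1).

Definition k_prop (s : R) (q : Z) (f : Z -> R) (k : Z) : Prop :=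
  forall n : Z, (k <= Z.abs n <= q)%Z ->
    0 <= f n /\ dft_im q f n = 0 /\ 0 <= s * dft_re q f n.

Definition is_k (s : R) (q : Z) (f : Z -> R) (k : Z) : Prop :=
  (0 <= k)%Z /\ k_prop s q f k /\
  forall k' : Z, (0 <= k' < k)%Z -> ~ k_prop s q f k'.

Definition is_Adisc (s : R) (q : Z) (m : Z) : Prop :=
  (exists f, in_Adisc s q f /\ is_k s q f m) /\
  forall f k, in_Adisc s q f -> is_k s q f k -> (m <= k)%Z.

Definition gfun (l : Z) (n : Z) : R :=
  if (Z.abs n <=? l)%Z then sin (2 * PI * IZR (Z.abs n) / IZR l) else 0.

(* f_star = g - g^ (g^ being real). *)
Definition fstar (l q : Z) (n : Z) : R := gfun l n - dft_re q (gfun l) n.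

(* Main.v *)
Require Import Defs.
From Stdlib Require Import Reals ZArith Lra Lia Psatz.
Open Scope R_scope.

Fixpoint ns (G : nat -> R) (M : nat) : R :=
  match M with O => 0 | S M' => ns G M' + G (S M') end.

Lemma ns_S G M : ns G (S M) = ns G M + G (S M).
Proof. reflexivity. Qed.

Lemma ns_ext G H M : (forall m, (1 <= m <= M)%nat -> G m = H m) -> ns G M = ns H M.
Proof. induction M; simpl; intros E; auto. rewrite IHM by (intros; apply E; lia).
 rewrite E by lia. reflexivity. Qed.

Lemma ns_plus G H M : ns (fun m => G m + H m) M = ns G M + ns H M.
Proof. induction M; simpl; [lra|rewrite IHM; lra]. Qed.

Lemma ns_scal a G M : ns (fun m => a * G m) M = a * ns G M.
Proof. induction M; simpl; [lra| rewrite IHM; lra]. Qed.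

Lemma ns_trunc G L M : (L <= M)%nat -> (forall m, (L < m <= M)%nat -> G m = 0) -> ns G M = ns G L.
Proof. induction M; intros HL HZ.
 - assert (L=0)%nat by lia; subst; auto.
 - destruct (Nat.eq_dec L (S M)). subst; auto. simpl. rewrite HZ by lia.
   rewrite IHM by (try lia; intros; apply HZ; lia). lra. Qed.

Lemma ns_zero G M : (forall m, (1<=m<=M)%nat -> G m = 0) -> ns G M = 0.
Proof. induction M; simpl; intros E; auto. rewrite IHM by (intros; apply E; lia).
 rewrite E by lia. lra. Qed.

Lemma zsum_ext q F G : (0 <= q)%Z -> (forall n, (-q <= n <= q)%Z -> F n = G n) -> zsum q F = zsum q G.
Proof. intros Hq E. unfold zsum. apply sum_eq. intros i Hi. apply E. lia. Qed.

Lemma zsum_plus q F G : zsum q (fun n => F n + G n) = zsum q F + zsum q G.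
Proof. unfold zsum. apply plus_sum. Qed.

Lemma zsum_scal q a F : zsum q (fun n => a * F n) = a * zsum q F.
Proof. unfold zsum. rewrite scal_sum. apply sum_eq. intros; ring. Qed.

Lemma zsum_sym_nat F p : sum_f_R0 (fun i => F (Z.of_nat i - Z.of_nat p)%Z) (2*p)
   = F 0%Z + ns (fun m => F (Z.of_nat m) + F (- Z.of_nat m)%Z) p.
Proof.
 induction p.
 - simpl. lra.
 - replace (2 * S p)%nat with (S (S (2*p))) by lia.
   rewrite tech5. rewrite decomp_sum by lia. replace (pred (S (2*p))) with (2*p)%nat by lia.
   assert (E: sum_f_R0 (fun i => F (Z.of_nat (S i) - Z.of_nat (S p))%Z) (2*p)
     = sum_f_R0 (fun i => F (Z.of_nat i - Z.of_nat p)%Z) (2*p))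
     by (apply sum_eq; intros; f_equal; lia).
   cbv beta. rewrite E, IHp, ns_S. cbv beta.
   replace (Z.of_nat 0 - Z.of_nat (S p))%Z with (- Z.of_nat (S p))%Z by lia.
   replace (Z.of_nat (S (S (2*p)%nat)) - Z.of_nat (S p))%Z with (Z.of_nat (S p)) by lia. lra.
Qed.

Lemma zsum_sym q F : (0 <= q)%Z ->
  zsum q F = F 0%Z + ns (fun m => F (Z.of_nat m) + F (- Z.of_nat m)%Z) (Z.to_nat q).
Proof. intros Hq. destruct (Z_of_nat_complete q Hq) as [p ->]. unfold zsum.
 replace (Z.to_nat (2 * Z.of_nat p)) with (2*p)%nat by lia. rewrite Nat2Z.id.
 apply zsum_sym_nat. Qed.

Lemma sum_delta (f : nat -> R) j N : (j <= N)%nat ->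
  sum_f_R0 (fun i => if Nat.eqb i j then f i else 0) N = f j.
Proof. induction N; intros H.
 - simpl. assert (j = 0)%nat by lia. subst. reflexivity.
 - rewrite tech5. destruct (Nat.eq_dec j (S N)).
   + subst. rewrite Nat.eqb_refl. rewrite (sum_eq _ (fun _ => 0)).
     * assert (Z0: forall K, sum_f_R0 (fun _ => 0) K = 0).
       { induction K. simpl; lra. rewrite tech5, IHK. lra. }
       rewrite Z0. lra.
     * intros i Hi. destruct (Nat.eqb_spec i (S N)); [lia|auto].
   + rewrite IHN by lia. destruct (Nat.eqb_spec (S N) j); [lia|lra].
Qed.

Lemma zsum_delta q F k : (-q <= k <= q)%Z ->
  zsum q (fun m => if Z.eqb m k then F m else 0) = F k.
Proof. intros Hk. unfold zsum.
 rewrite (sum_eq _ (fun i => if Nat.eqb i (Z.to_nat (k+q)) then F (Z.of_nat i - q)%Z else 0)).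
 - rewrite sum_delta by lia. f_equal. lia.
 - intros i Hi. destruct (Z.eqb_spec (Z.of_nat i - q) k); destruct (Nat.eqb_spec i (Z.to_nat (k+q))); auto; lia.
Qed.

Lemma sum_exch (H : nat -> nat -> R) N1 N2 :
  sum_f_R0 (fun i => sum_f_R0 (fun j => H i j) N2) N1 = sum_f_R0 (fun j => sum_f_R0 (fun i => H i j) N1) N2.
Proof. induction N1.
 - simpl. reflexivity.
 - rewrite tech5, IHN1. rewrite <- plus_sum. apply sum_eq. intros. rewrite tech5. reflexivity.
Qed.

Lemma zsum_exch q (H : Z -> Z -> R) :
  zsum q (fun n => zsum q (fun m => H n m)) = zsum q (fun m => zsum q (fun n => H n m)).
Proof. unfold zsum. apply sum_exch. Qed.

Lemma L1 y M : 2 * sin y * ns (fun m => sin (2*y*INR m)) M = cos y - cos (y*(2*INR M+1)).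
Proof. induction M.
 - simpl ns. replace (y*(2*INR 0+1)) with y by (simpl; ring). lra.
 - rewrite ns_S, Rmult_plus_distr_l, IHM. rewrite S_INR.
   set (X := 2*y*(INR M+1)).
   replace (y*(2*INR M+1)) with (X - y) by (unfold X; ring).
   replace (y*(2*(INR M+1)+1)) with (X + y) by (unfold X; ring).
   rewrite cos_minus, cos_plus. ring.
Qed.

Lemma L2 y M : 2 * sin y * ns (fun m => cos (2*y*INR m)) M = sin (y*(2*INR M+1)) - sin y.
Proof. induction M.
 - simpl ns. replace (y*(2*INR 0+1)) with y by (simpl; ring). lra.
 - rewrite ns_S, Rmult_plus_distr_l, IHM. rewrite S_INR.
   set (X := 2*y*(INR M+1)).
   replace (y*(2*INR M+1)) with (X - y) by (unfold X; ring).
   replace (y*(2*(INR M+1)+1)) with (X + y) by (unfold X; ring).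
   rewrite sin_minus, sin_plus. ring.
Qed.

Lemma sin_Zpi z : sin (IZR z * PI) = 0.
Proof. apply sin_eq_0_1. exists z. reflexivity. Qed.

Lemma cos_per_Z x z : cos (x + 2*PI*IZR z) = cos x.
Proof. rewrite cos_plus.
 replace (2*PI*IZR z) with (2*(IZR z*PI)) by ring.
 rewrite cos_2a_sin, sin_2a, sin_Zpi. ring. Qed.

Lemma prod_sc P Q : sin (P+Q) * cos (P-Q) = /2 * (sin (2*P) + sin (2*Q)).
Proof. rewrite sin_plus, cos_minus, !sin_2a.
 assert (HP: sin P ^2 + cos P^2 = 1) by (rewrite <- (sin2_cos2 P); unfold Rsqr; ring).
 assert (HQ: sin Q ^2 + cos Q^2 = 1) by (rewrite <- (sin2_cos2 Q); unfold Rsqr; ring).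
 transitivity (sin P * cos P * (sin Q^2+cos Q^2) + sin Q*cos Q*(sin P^2+cos P^2)). ring.
 rewrite HP, HQ. field. Qed.

Lemma ns_sinzero w M : sin w = 0 -> ns (fun m => sin (2*w*INR m)) M = 0.
Proof. intros H. apply sin_eq_0_0 in H. destruct H as [K HK]. apply ns_zero. intros m _.
 replace (2*w*INR m) with (IZR (2*K*Z.of_nat m) * PI).
 apply sin_Zpi. rewrite HK, INR_IZR_INZ, !mult_IZR. ring. Qed.

Section Trig.
Variables (a b : R) (L : nat).
Hypothesis HaL : a * INR L = 2 * PI.

Let S := ns (fun m => sin (a*INR m) * cos (b*INR m)) L.
Let u := (a-b)/2.
Let v := (a+b)/2.

Lemma S_split : S = /2 * (ns (fun m => sin (2*v*INR m)) L + ns (fun m => sin (2*u*INR m)) L).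
Proof. unfold S. rewrite <- ns_plus, <- ns_scal. apply ns_ext. intros m _.
 replace (a*INR m) with (v*INR m + u*INR m) by (unfold u, v; field).
 replace (b*INR m) with (v*INR m - u*INR m) by (unfold u, v; field).
 rewrite prod_sc. f_equal. f_equal; f_equal; ring. Qed.

Lemma D_eq : cos b - cos a = 2 * sin u * sin v.
Proof. replace b with (v-u) by (unfold u,v; field). replace a with (v+u) by (unfold u,v; field).
 rewrite cos_minus, cos_plus. ring. Qed.

Lemma T1 : S * (cos b - cos a) = sin a * sin (b*INR L/2)^2.
Proof.
 rewrite D_eq, S_split.
 replace (/ 2 * (ns (fun m => sin (2 * v * INR m)) L + ns (fun m => sin (2 * u * INR m)) L) *
  (2 * sin u * sin v)) with (/2 * (sin u * (2 * sin v * ns (fun m => sin (2 * v * INR m)) L)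
     + sin v * (2 * sin u * ns (fun m => sin (2 * u * INR m)) L))) by ring.
 rewrite !L1.
 set (c := b * INR L).
 replace (v*(2*INR L+1)) with (v + c + 2*PI*IZR 1) by (unfold v, c; simpl; rewrite <- HaL; field).
 replace (u*(2*INR L+1)) with (u - c + 2*PI*IZR 1) by (unfold u, c; simpl; rewrite <- HaL; field).
 rewrite !cos_per_Z.
 replace a with (u+v) by (unfold u,v; field).
 replace (cos c) with (1 - 2 * sin (c/2) * sin (c/2)) by (rewrite <- cos_2a_sin; f_equal; field).
 rewrite cos_plus, cos_minus, sin_plus.
 replace (cos c) with (1 - 2 * sin (c/2) * sin (c/2)) by (rewrite <- cos_2a_sin; f_equal; field).
 field.
Qed.

Lemma T2 : cos b = cos a -> S = 0.
Proof.
 intros E. assert (H0 : sin u * sin v = 0) by (pose proof D_eq; lra).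
 rewrite S_split.
 assert (Hw : forall w, (exists z, w * (2*INR L+1) = w + 2*PI*IZR z) ->
   ns (fun m => sin (2*w*INR m)) L = 0).
 { intros w [z Hz]. destruct (Req_dec (sin w) 0) as [Hs|Hs].
   - apply ns_sinzero; auto.
   - pose proof (L1 w L) as HL. rewrite Hz, cos_per_Z in HL.
     apply (Rmult_eq_reg_l (2 * sin w)). lra. intro; apply Hs; lra. }
 destruct (Rmult_integral _ _ H0) as [Hu|Hv].
 - rewrite (ns_sinzero u) by auto.
   apply sin_eq_0_0 in Hu. destruct Hu as [K HK].
   rewrite Hw. lra. exists (2 - K * Z.of_nat L)%Z.
   rewrite minus_IZR, mult_IZR, <- INR_IZR_INZ.
   replace (v * (2*INR L+1)) with (v + (a+b)*INR L) by (unfold v; field).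
   replace b with (a - 2*u) by (unfold u; field). rewrite HK.
   replace ((a + (a - 2 * (IZR K * PI))) * INR L) with (2*(a*INR L) - 2*IZR K*PI*INR L) by ring.
   rewrite HaL. ring.
 - rewrite (ns_sinzero v) by auto.
   apply sin_eq_0_0 in Hv. destruct Hv as [K HK].
   rewrite Hw. lra. exists (2 - K * Z.of_nat L)%Z.
   rewrite minus_IZR, mult_IZR, <- INR_IZR_INZ.
   replace (u * (2*INR L+1)) with (u + (a-b)*INR L) by (unfold u; field).
   replace b with (2*v - a) by (unfold v; field). rewrite HK.
   replace ((a - (2 * (IZR K * PI) - a)) * INR L) with (2*(a*INR L) - 2*IZR K*PI*INR L) by ring.
   rewrite HaL. ring.
Qed.
End Trig.

Lemma zsum_mulr q F b : zsum q F * b = zsum q (fun n => F n * b).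
Proof. unfold zsum. rewrite Rmult_comm, scal_sum. reflexivity. Qed.

Lemma ns_const c M : ns (fun _ => c) M = c * INR M.
Proof. induction M. simpl; ring. rewrite ns_S, IHM, S_INR. ring. Qed.

Lemma dft_re_even q f k : (0 <= q)%Z -> dft_re q f (-k) = dft_re q f k.
Proof. intros Hq. unfold dft_re. f_equal. apply zsum_ext; auto. intros n _.
 rewrite opp_IZR. replace (2 * PI * - IZR k * IZR n / IZR (2 * q + 1)) with
  (- (2 * PI * IZR k * IZR n / IZR (2 * q + 1))) by (unfold Rdiv; ring).
 rewrite cos_neg. reflexivity. Qed.

Lemma dft_im_even q f k : (0 <= q)%Z -> even_on q f -> dft_im q f k = 0.
Proof. intros Hq Hf. unfold dft_im. rewrite zsum_sym by auto.
 rewrite ns_zero.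
 - replace (2 * PI * IZR k * IZR 0 / IZR (2 * q + 1)) with 0 by (simpl; unfold Rdiv; ring).
   rewrite sin_0. ring.
 - intros m Hm. rewrite Hf by lia. rewrite opp_IZR.
   replace (2 * PI * IZR k * - IZR (Z.of_nat m) / IZR (2 * q + 1)) with
    (- (2 * PI * IZR k * IZR (Z.of_nat m) / IZR (2 * q + 1))) by (unfold Rdiv; ring).
   rewrite sin_neg. ring.
Qed.

Lemma kernel q j : (0 <= q)%Z -> (Z.abs j <= 2*q)%Z ->
  zsum q (fun n => cos (2*PI*IZR j*IZR n/IZR (2*q+1))) = if Z.eqb j 0 then IZR (2*q+1) else 0.
Proof. intros Hq Hj.
 assert (HN : 0 < IZR (2*q+1)) by (apply IZR_lt; lia).
 set (N := IZR (2*q+1)) in *.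
 set (y := PI*IZR j/N).
 rewrite zsum_sym by auto.
 replace (cos (2 * PI * IZR j * IZR 0 / N)) with 1 by (rewrite <- cos_0; f_equal; simpl; unfold Rdiv; ring).
 rewrite (ns_ext _ (fun m => 2 * cos (2*y*INR m))).
 2:{ intros m _. rewrite opp_IZR, INR_IZR_INZ.
   replace (2 * PI * IZR j * - IZR (Z.of_nat m) / N) with
    (- (2 * PI * IZR j * IZR (Z.of_nat m) / N)) by (unfold Rdiv; ring).
   rewrite cos_neg. unfold y. replace (2 * (PI * IZR j / N) * IZR (Z.of_nat m)) with
     (2 * PI * IZR j * IZR (Z.of_nat m) / N) by (field; lra). ring. }
 rewrite ns_scal.
 destruct (Z.eqb_spec j 0) as [->|Hj0].
 - unfold y. rewrite (ns_ext _ (fun _ => 1)).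
   + rewrite ns_const, INR_IZR_INZ, Z2Nat.id by lia. unfold N. rewrite plus_IZR, mult_IZR. simpl. ring.
   + intros m _. rewrite <- cos_0. f_equal. simpl. unfold Rdiv. ring.
 - assert (Hs : sin y <> 0).
   { intro Hs. apply sin_eq_0_0 in Hs. destruct Hs as [K HK]. unfold y in HK.
     assert (IZR j = IZR (K * (2*q+1))).
     { rewrite mult_IZR. fold N. apply (Rmult_eq_reg_l (PI / N)).
       - transitivity (PI * IZR j / N). field; lra. rewrite HK. field; lra.
       - pose proof PI_RGT_0. apply Rgt_not_eq. unfold Rdiv. apply Rmult_gt_0_compat; auto. apply Rinv_0_lt_compat; auto. }
     apply eq_IZR in H. subst j. destruct (Z.eq_dec K 0). subst; lia. nia. }
   pose proof (L2 y (Z.to_nat q)) as HL.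
   replace (y * (2 * INR (Z.to_nat q) + 1)) with (IZR j * PI) in HL.
   2:{ unfold y. rewrite INR_IZR_INZ, Z2Nat.id by lia. unfold N. rewrite plus_IZR, mult_IZR. field.
       change 0 with (IZR 0). rewrite <- mult_IZR, <- plus_IZR. apply not_0_IZR. lia. }
   rewrite sin_Zpi in HL.
   apply (Rmult_eq_reg_l (2 * sin y)). 2: (intro; apply Hs; lra).
   rewrite Rmult_plus_distr_l, Rmult_0_r.
   replace (2 * sin y * (2 * ns (fun m : nat => cos (2 * y * INR m)) (Z.to_nat q))) with
     (2 * (2 * sin y * ns (fun m : nat => cos (2 * y * INR m)) (Z.to_nat q))) by ring.
   rewrite HL. ring.
Qed.

Lemma inversion q f k : (0 <= q)%Z -> (- q <= k <= q)%Z ->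
  dft_re q (dft_re q f) k = /2 * (f k + f (-k)%Z).
Proof. intros Hq Hk.
 assert (HN : 0 < IZR (2*q+1)) by (apply IZR_lt; lia).
 set (N := IZR (2*q+1)) in *.
 unfold dft_re. fold N.
 set (s := sqrt N).
 assert (Hs : s * s = N) by (apply sqrt_sqrt; lra).
 assert (Hs0 : 0 < s) by (apply sqrt_lt_R0; auto).
 rewrite (zsum_ext q _ (fun n => / s * zsum q (fun m => f m * cos (2 * PI * IZR n * IZR m / N) * cos (2 * PI * IZR k * IZR n / N)))); auto.
 2:{ intros n _. rewrite Rmult_assoc, zsum_mulr. reflexivity. }
 rewrite zsum_scal, zsum_exch.
 rewrite (zsum_ext q _ (fun m => /2 * N * ((if Z.eqb m (-k) then f m else 0) + (if Z.eqb m k then f m else 0)))); auto.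
 2:{ intros m Hm.
   rewrite (zsum_ext q _ (fun n => f m * /2 * (cos (2*PI*IZR (m+k)*IZR n/N) + cos (2*PI*IZR (m-k)*IZR n/N)))); auto.
   2:{ intros n _. rewrite plus_IZR, minus_IZR.
     replace (2 * PI * (IZR m + IZR k) * IZR n / N) with
       (2 * PI * IZR n * IZR m / N + 2 * PI * IZR k * IZR n / N) by (field; lra).
     replace (2 * PI * (IZR m - IZR k) * IZR n / N) with
       (2 * PI * IZR n * IZR m / N - 2 * PI * IZR k * IZR n / N) by (field; lra).
     rewrite cos_plus, cos_minus. field. }
   rewrite zsum_scal, zsum_plus, !kernel by lia. fold N.
   destruct (Z.eqb_spec (m+k) 0); destruct (Z.eqb_spec (m-k) 0);
   destruct (Z.eqb_spec m (-k)); destruct (Z.eqb_spec m k); try lia; try ring. }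
 rewrite zsum_scal, zsum_plus, !zsum_delta by lia.
 field_simplify; [ | lra ].
 replace (s^2) with N by (rewrite <- Hs; ring). field. lra.
Qed.

Section G.
Variables (l q : Z).
Hypothesis hl3 : (3 <= l)%Z.
Hypothesis hq : (2 * q + 1 = l * l)%Z.

Lemma lq : (l <= q)%Z. Proof. nia. Qed.
Lemma q0 : (0 <= q)%Z. Proof. nia. Qed.
Lemma lpos : 0 < IZR l. Proof. apply IZR_lt; lia. Qed.

Lemma sqrtN : sqrt (IZR (2*q+1)) = IZR l.
Proof. rewrite hq, mult_IZR. apply sqrt_square. pose proof lpos; lra. Qed.

Lemma INRL : INR (Z.to_nat l) = IZR l.
Proof. rewrite INR_IZR_INZ, Z2Nat.id by lia. reflexivity. Qed.

Lemma gfun_even n : gfun l (-n) = gfun l n.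
Proof. unfold gfun. rewrite Z.abs_opp. reflexivity. Qed.

Definition aa := 2*PI/IZR l.
Definition bb k := 2*PI*IZR k/IZR (l*l).

Lemma ghat_ns k : dft_re q (gfun l) k =
  2 / IZR l * ns (fun m => sin (aa*INR m) * cos (bb k*INR m)) (Z.to_nat l).
Proof. pose proof lpos as Hl. pose proof lq. pose proof q0.
 unfold dft_re. rewrite sqrtN, zsum_sym by auto.
 replace (gfun l 0) with 0.
 2:{ unfold gfun. destruct (Z.abs 0 <=? l)%Z; auto.
     replace (2 * PI * IZR (Z.abs 0) / IZR l) with 0 by (simpl; unfold Rdiv; ring). rewrite sin_0; auto. }
 rewrite (ns_trunc _ (Z.to_nat l)) by (try lia; intros m Hm; unfold gfun; rewrite Z.abs_opp, Z.abs_eq by lia;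
    replace (Z.of_nat m <=? l)%Z with false by (symmetry; apply Z.leb_gt; lia); ring).
 rewrite (ns_ext _ (fun m => 2 * (sin (aa*INR m) * cos (bb k*INR m)))).
 - rewrite ns_scal. unfold Rdiv. ring.
 - intros m Hm. unfold gfun. rewrite Z.abs_opp, Z.abs_eq by lia.
   replace (Z.of_nat m <=? l)%Z with true by (symmetry; apply Z.leb_le; lia).
   rewrite opp_IZR, hq, INR_IZR_INZ.
   replace (2 * PI * IZR k * - IZR (Z.of_nat m) / IZR (l * l)) with
    (- (bb k * IZR (Z.of_nat m))) by (unfold bb; field; rewrite mult_IZR; nra).
   replace (2 * PI * IZR k * IZR (Z.of_nat m) / IZR (l * l)) with
    (bb k * IZR (Z.of_nat m)) by (unfold bb; field; rewrite mult_IZR; nra).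
   replace (2 * PI * IZR (Z.of_nat m) / IZR l) with (aa * IZR (Z.of_nat m)) by (unfold aa; field; lra).
   rewrite cos_neg. ring.
Qed.

Lemma aL : aa * INR (Z.to_nat l) = 2 * PI.
Proof. rewrite INRL. unfold aa. field. pose proof lpos; lra. Qed.

Lemma ghat_formula n :
  cos (2 * PI * IZR n / IZR (l * l)) - cos (2 * PI / IZR l) <> 0 ->
  dft_re q (gfun l) n =
  2 * (sin (PI * IZR n / IZR l)) ^ 2 * sin (2 * PI / IZR l) /
  (IZR l * (cos (2 * PI * IZR n / IZR (l * l)) - cos (2 * PI / IZR l))).
Proof. intros HD. pose proof lpos as Hl. rewrite ghat_ns.
 pose proof (T1 aa (bb n) (Z.to_nat l) aL) as HT.
 fold (bb n) in HD. fold aa in HD |- *. fold (bb n).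
 replace (PI * IZR n / IZR l) with (bb n * INR (Z.to_nat l) / 2).
 2:{ rewrite INRL. unfold bb. rewrite mult_IZR. field. lra. }
 set (S := ns _ _) in *.
 assert (ES : S = sin aa * sin (bb n * INR (Z.to_nat l) / 2) ^ 2 / (cos (bb n) - cos aa))
   by (rewrite <- HT; field; lra).
 rewrite ES. field. split; lra.
Qed.

Lemma ghat_zero n :
  cos (2 * PI * IZR n / IZR (l * l)) - cos (2 * PI / IZR l) = 0 ->
  dft_re q (gfun l) n = 0.
Proof. intros HD. rewrite ghat_ns. rewrite (T2 aa (bb n) (Z.to_nat l) aL). ring.
 unfold aa, bb. lra. Qed.

End G.

Lemma ang_lt X Y C : 0 < C -> X < Y -> 2*PI*X/C < 2*PI*Y/C.
Proof. intros HC H. pose proof PI_RGT_0. unfold Rdiv. apply Rmult_lt_compat_r.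
 apply Rinv_0_lt_compat; auto. nra. Qed.

Lemma ang_le X Y C : 0 < C -> X <= Y -> 2*PI*X/C <= 2*PI*Y/C.
Proof. intros HC H. pose proof PI_RGT_0. unfold Rdiv. apply Rmult_le_compat_r.
 left; apply Rinv_0_lt_compat; auto. nra. Qed.

Lemma ang_bd X C : 0 < C -> 0 <= X -> 2*X <= C -> 0 <= 2*PI*X/C <= PI.
Proof. intros HC H0 H1. split.
 - replace 0 with (2*PI*0/C) by (field; lra). apply ang_le; auto.
 - replace PI with (2*PI*(C/2)/C) at 2 by (field; lra). apply ang_le; lra. Qed.

Lemma dft_re_sub q F G k : dft_re q (fun n => F n - G n) k = dft_re q F k - dft_re q G k.
Proof. unfold dft_re, zsum. rewrite <- Rmult_minus_distr_l, <- minus_sum. f_equal.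
 apply sum_eq. intros. ring. Qed.

Lemma dft_re_scal q c F k : dft_re q (fun n => c * F n) k = c * dft_re q F k.
Proof. unfold dft_re.
 transitivity (/ sqrt (IZR (2*q+1)) * (c * zsum q (fun n => F n * cos (2 * PI * IZR k * IZR n / IZR (2 * q + 1))))).
 - f_equal. rewrite <- zsum_scal. unfold zsum. apply sum_eq. intros; ring.
 - ring. Qed.

Lemma IZR2le x y : (2*x <= y)%Z -> 2*IZR x <= IZR y.
Proof. intros H. change 2 with (IZR 2). rewrite <- mult_IZR. apply IZR_le; auto. Qed.

Section S.
Variables (l q : Z).
Hypothesis hl3 : (3 <= l)%Z.
Hypothesis hq : (2 * q + 1 = l * l)%Z.

Let Hl := lpos l hl3.
Let HLL : 0 < IZR (l*l). Proof. apply IZR_lt; nia. Qed.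

Lemma sinaa_pos : 0 < sin (2*PI/IZR l).
Proof. pose proof PI_RGT_0. apply sin_gt_0.
 - unfold Rdiv. apply Rmult_lt_0_compat. lra. apply Rinv_0_lt_compat; auto.
 - assert (3 <= IZR l) by (apply IZR_le; auto).
   apply (Rmult_lt_reg_r (IZR l)); auto. unfold Rdiv. rewrite Rmult_assoc, Rinv_l by lra. nra. Qed.

Lemma cos_abs n : cos (2*PI*IZR n/IZR (l*l)) = cos (2*PI*IZR (Z.abs n)/IZR (l*l)).
Proof. destruct (Z.abs_spec n) as [[_ ->]|[_ ->]]; auto. rewrite opp_IZR.
 replace (2 * PI * - IZR n / IZR (l * l)) with (- (2 * PI * IZR n / IZR (l * l))) by (unfold Rdiv; ring).
 rewrite cos_neg. reflexivity. Qed.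

Lemma aa_eq : 2*PI/IZR l = 2*PI*IZR l/IZR (l*l).
Proof. rewrite mult_IZR. field. lra. Qed.

Lemma D_neg n : (l < Z.abs n <= q)%Z ->
  cos (2*PI*IZR n/IZR (l*l)) - cos (2*PI/IZR l) < 0.
Proof. intros Hn. rewrite cos_abs, aa_eq.
 assert (cos (2*PI*IZR (Z.abs n)/IZR (l*l)) < cos (2*PI*IZR l/IZR (l*l))); [|lra].
 apply cos_decreasing_1.
 - apply ang_bd; auto. apply IZR_le; lia. apply IZR2le; nia.
 - apply ang_bd; auto. apply IZR_le; lia. apply IZR2le; nia.
 - apply ang_bd; auto. apply IZR_le; lia. apply IZR2le; nia.
 - apply ang_bd; auto. apply IZR_le; lia. apply IZR2le; nia.
 - apply ang_lt; auto. apply IZR_lt; lia.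
Qed.

Lemma D_pos : cos (2*PI*IZR (l-1)/IZR (l*l)) - cos (2*PI/IZR l) > 0.
Proof. rewrite aa_eq.
 assert (cos (2*PI*IZR l/IZR (l*l)) < cos (2*PI*IZR (l-1)/IZR (l*l))); [|lra].
 apply cos_decreasing_1.
 - apply ang_bd; auto. apply IZR_le; lia. apply IZR2le; nia.
 - apply ang_bd; auto. apply IZR_le; lia. apply IZR2le; nia.
 - apply ang_bd; auto. apply IZR_le; lia. apply IZR2le; nia.
 - apply ang_bd; auto. apply IZR_le; lia. apply IZR2le; nia.
 - apply ang_lt; auto. apply IZR_lt; lia.
Qed.

Lemma D_zero n : Z.abs n = l -> cos (2*PI*IZR n/IZR (l*l)) - cos (2*PI/IZR l) = 0.
Proof. intros H. rewrite cos_abs, H, aa_eq. ring. Qed.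

Lemma ghat_sin0 n : sin (PI * IZR n / IZR l) = 0 -> dft_re q (gfun l) n = 0.
Proof. intros Hs.
 destruct (Req_dec (cos (2 * PI * IZR n / IZR (l * l)) - cos (2 * PI / IZR l)) 0) as [H|H].
 - apply (ghat_zero l q hl3 hq); auto.
 - rewrite (ghat_formula l q hl3 hq) by auto. rewrite Hs. unfold Rdiv. ring. Qed.

Lemma gfun_zero n : (l <= Z.abs n)%Z -> gfun l n = 0.
Proof. intros H. unfold gfun. destruct (Z.leb_spec (Z.abs n) l); auto.
 replace (Z.abs n) with l by lia. replace (2*PI*IZR l/IZR l) with (2*PI) by (field; lra).
 apply sin_2PI. Qed.

Lemma fstar_even n : fstar l q (-n) = fstar l q n.
Proof. unfold fstar. rewrite gfun_even, dft_re_even; auto. apply (q0 l q hl3 hq). Qed.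

Lemma fstar_0 : fstar l q 0 = 0.
Proof. unfold fstar. rewrite ghat_sin0.
 - unfold gfun. simpl. replace (2 * PI * 0 / IZR l) with 0 by (unfold Rdiv; ring). rewrite sin_0.
   destruct (0 <=? l)%Z; ring.
 - replace (PI * IZR 0 / IZR l) with 0 by (simpl; unfold Rdiv; ring). apply sin_0. Qed.

Lemma fstar_nonneg n : (l <= Z.abs n <= q)%Z -> 0 <= fstar l q n.
Proof. intros Hn. unfold fstar. rewrite gfun_zero by lia.
 destruct (Z.eq_dec (Z.abs n) l) as [E|E].
 - rewrite (ghat_zero l q hl3 hq); auto. lra. apply D_zero; auto.
 - pose proof (D_neg n ltac:(lia)) as HD. rewrite (ghat_formula l q hl3 hq); auto; [|lra].
   pose proof sinaa_pos. set (s := sin (PI * IZR n / IZR l)) in *.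
   set (D := cos (2 * PI * IZR n / IZR (l * l)) - cos (2 * PI / IZR l)) in *.
   assert (/ (IZR l * D) < 0) by (apply Rinv_lt_0_compat; nra).
   unfold Rdiv. assert (0 <= 2 * s^2 * sin (2*PI/IZR l)) by nra. nra.
Qed.

Lemma fstar_q_pos : 0 < fstar l q q.
Proof. assert (l < q)%Z by nia. unfold fstar. rewrite gfun_zero by lia.
 pose proof (D_neg q ltac:(lia)) as HD. rewrite (ghat_formula l q hl3 hq); auto; [|lra].
 pose proof sinaa_pos.
 assert (Hs : sin (PI * IZR q / IZR l) <> 0).
 { intro Hs. apply sin_eq_0_0 in Hs. destruct Hs as [K HK].
   assert (IZR q = IZR (K * l)).
   { rewrite mult_IZR. apply (Rmult_eq_reg_l (PI / IZR l)).
     - transitivity (PI * IZR q / IZR l). field; lra. rewrite HK. field; lra.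
     - pose proof PI_RGT_0. apply Rgt_not_eq. unfold Rdiv. apply Rmult_gt_0_compat; auto. apply Rinv_0_lt_compat; auto. }
   apply eq_IZR in H1. rewrite H1 in hq.
   assert (H2: (l*(l-2*K) = 1)%Z) by nia.
   destruct (Z.le_gt_cases (l-2*K) 0); nia. }
 set (s := sin (PI * IZR q / IZR l)) in *.
 set (D := cos (2 * PI * IZR q / IZR (l * l)) - cos (2 * PI / IZR l)) in *.
 assert (/ (IZR l * D) < 0) by (apply Rinv_lt_0_compat; nra).
 assert (0 < s^2) by (destruct (Rlt_or_le 0 s); [simpl; nra| assert (s < 0) by lra; simpl; nra]).
 unfold Rdiv. assert (0 < 2 * s^2 * sin (2*PI/IZR l)) by nra. nra.
Qed.

Lemma fstar_lm1_neg : fstar l q (l-1) < 0.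
Proof. unfold fstar. pose proof D_pos as HD. pose proof sinaa_pos.
 rewrite (ghat_formula l q hl3 hq); auto; [|lra].
 assert (Hg : gfun l (l-1) < 0).
 { unfold gfun. rewrite Z.abs_eq by lia. replace (l-1 <=? l)%Z with true by (symmetry; apply Z.leb_le; lia).
   apply sin_lt_0.
   - rewrite minus_IZR. assert (3 <= IZR l) by (apply IZR_le; auto). pose proof PI_RGT_0.
     apply (Rmult_lt_reg_r (IZR l)); auto. unfold Rdiv. rewrite Rmult_assoc, Rinv_l by lra. nra.
   - rewrite minus_IZR. pose proof PI_RGT_0.
     apply (Rmult_lt_reg_r (IZR l)); auto. unfold Rdiv. rewrite Rmult_assoc, Rinv_l by lra. nra. }
 assert (Hs : 0 < sin (PI * IZR (l-1) / IZR l)).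
 { apply sin_gt_0; rewrite minus_IZR; pose proof PI_RGT_0; assert (3 <= IZR l) by (apply IZR_le; auto).
   - unfold Rdiv. apply Rmult_lt_0_compat. nra. apply Rinv_0_lt_compat; auto.
   - apply (Rmult_lt_reg_r (IZR l)); auto. unfold Rdiv. rewrite Rmult_assoc, Rinv_l by lra. nra. }
 set (s := sin (PI * IZR (l-1) / IZR l)) in *.
 set (D := cos (2 * PI * IZR (l-1) / IZR (l * l)) - cos (2 * PI / IZR l)) in *.
 assert (0 < / (IZR l * D)) by (apply Rinv_0_lt_compat; nra).
 assert (0 < s^2) by (simpl; nra). unfold Rdiv. assert (0 < 2 * s^2 * sin (2*PI/IZR l)) by nra. nra.
Qed.

End S.

Theorem mainTheorem16 (l q : Z)
  (hl3 : (3 <= l)%Z) (hlodd : Z.Odd l) (hq : (2 * q + 1 = l * l)%Z) :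
  (forall n : Z, (Z.abs n <= q)%Z ->
     dft_im q (gfun l) n = 0 /\
     (cos (2 * PI * IZR n / IZR (l * l)) - cos (2 * PI / IZR l) <> 0 ->
        dft_re q (gfun l) n =
        2 * (sin (PI * IZR n / IZR l)) ^ 2 * sin (2 * PI / IZR l) /
        (IZR l * (cos (2 * PI * IZR n / IZR (l * l)) - cos (2 * PI / IZR l)))) /\
     (cos (2 * PI * IZR n / IZR (l * l)) - cos (2 * PI / IZR l) = 0 ->
        dft_re q (gfun l) n = 0)) /\
  (forall n : Z, (Z.abs n <= q)%Z ->
     dft_im q (fstar l q) n = 0 /\ dft_re q (fstar l q) n = - fstar l q n) /\
  fstar l q 0%Z = 0 /\
  (forall n : Z, (l <= Z.abs n <= q)%Z -> 0 <= fstar l q n) /\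
  (exists c : R, 0 < c /\
     in_Adisc (-1) q (fun n => c * fstar l q n) /\
     is_k (-1) q (fun n => c * fstar l q n) l) /\
  (forall m : Z, is_Adisc (-1) q m -> (m <= l)%Z).
Proof.
 pose proof (q0 l q hl3 hq) as Hq0. pose proof (lq l q hl3 hq) as Hlq.
 assert (Hev : even_on q (fstar l q)) by (intros m _; apply fstar_even; auto).
 assert (Hdf : forall n, (Z.abs n <= q)%Z -> dft_re q (fstar l q) n = - fstar l q n).
 { intros n Hn. change (fstar l q) with (fun m => gfun l m - dft_re q (gfun l) m).
   rewrite dft_re_sub, inversion by lia. rewrite gfun_even. unfold fstar. field. }
 assert (Hfq := fstar_q_pos l q hl3 hq).
 set (c := / fstar l q q).
 assert (Hc : 0 < c) by (apply Rinv_0_lt_compat; auto).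
 assert (Hcq : c * fstar l q q = 1) by (unfold c; field; lra).
 assert (Hevc : even_on q (fun n => c * fstar l q n)) by (intros m _; rewrite fstar_even; auto).
 assert (Hdfc : forall n, (Z.abs n <= q)%Z -> dft_re q (fun n => c * fstar l q n) n = - (c * fstar l q n)).
 { intros n Hn. rewrite dft_re_scal, Hdf by auto. ring. }
 assert (Hkp : k_prop (-1) q (fun n => c * fstar l q n) l).
 { intros n Hn. split; [|split].
   - apply Rmult_le_pos; [lra|]. apply fstar_nonneg; auto.
   - apply dft_im_even; auto.
   - rewrite Hdfc by lia. pose proof (fstar_nonneg l q hl3 hq n Hn). nra. }
 split; [|split; [|split; [|split; [|split]]]].
 - intros n Hn. split; [|split].
   + apply dft_im_even; auto. intros m _. apply gfun_even.
   + apply ghat_formula; auto.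
   + apply ghat_zero; auto.
 - intros n Hn. split; auto. apply dft_im_even; auto.
 - apply fstar_0; auto.
 - apply fstar_nonneg; auto.
 - exists c. split; auto. split.
   + unfold in_Adisc. split; [auto|].
     split; [rewrite fstar_0; auto; lra|].
     split; [split; [apply dft_im_even; auto| rewrite Hdfc by lia; rewrite fstar_0; auto; lra]|].
     split; [lra|]. split; [rewrite fstar_even; auto; lra|].
     split; [split; [apply dft_im_even; auto| rewrite Hdfc by lia; lra]|].
     split; [apply dft_im_even; auto| rewrite Hdfc by lia; rewrite fstar_even; auto; lra].
   + split; [lia|]. split; auto.
     intros k' Hk' Hkp'. destruct (Hkp' (l-1)%Z ltac:(lia)) as [H _].
     pose proof (fstar_lm1_neg l q hl3 hq). nra.
 - intros m [_ Hm]. apply (Hm (fun n => c * fstar l q n) l); auto.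
   unfold in_Adisc. split; [auto|].
     split; [rewrite fstar_0; auto; lra|].
     split; [split; [apply dft_im_even; auto| rewrite Hdfc by lia; rewrite fstar_0; auto; lra]|].
     split; [lra|]. split; [rewrite fstar_even; auto; lra|].
     split; [split; [apply dft_im_even; auto| rewrite Hdfc by lia; lra]|].
     split; [apply dft_im_even; auto| rewrite Hdfc by lia; rewrite fstar_even; auto; lra].
   split; [lia|]. split; auto.
   intros k' Hk' Hkp'. destruct (Hkp' (l-1)%Z ltac:(lia)) as [H _].
   pose proof (fstar_lm1_neg l q hl3 hq). nra.
Qed.
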